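(* Let $\mathcal{X}$ be a set, let $r:\mathcal{X}\to\mathbb{R}$ be a reward function, and let $p$ be a probability distribution on $\mathcal{X}$ (with $r$ measurable). Under the Bradley–Terry model, the preference probability of $i$ over $j$ is $P(i\succ j)=\frac{\exp(r(i))}{\exp(r(i))+\exp(r(j))}$. Consider the binary classifier whose positive-class probability is $$P(y=1\mid x)=\mathbb{E}_{j\sim p}\big[P(x\succ j)\big]=\mathbb{E}_{j\sim p}\left[\frac{\exp(r(x))}{\exp(r(x))+\exp(r(j))}\right],$$ and let $l(x)=\log\frac{P(y=1\mid x)}{1-P(y=1\mid x)}$ be its logit. Then for all $x_1,x_2\in\mathcal{X}$, $$r(x_1)>r(x_2)\iff l(x_1)>l(x_2).$$
   Context: The classifier is trained on preference data generated by the Bradley–Terry model, with preference pairs treated as binary classification data; this is modeled by identifying the probability that $x$ is classified positive with the expected probability that $x$ is preferred over a competitor $j$ drawn at random from $p$. *)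

(* Defs.v *)
From HB Require Import structures.
From mathcomp Require Import all_boot all_order all_algebra.
From mathcomp Require Import all_classical all_reals all_analysis.
Set Implicit Arguments. Unset Strict Implicit. Unset Printing Implicit Defensive.
Import Order.TTheory GRing.Theory Num.Theory.
Local Open Scope ring_scope.

Definition bt_pref (R : realType) (X : Type) (r : X -> R) (i j : X) : R :=
  expR (r i) / (expR (r i) + expR (r j)).

Definition pos_prob (R : realType) (d : measure_display) (X : measurableType d)
  (p : probability X R) (r : X -> R) (x : X) : R :=
  Rintegral p setT (fun j => bt_pref r x j).

Definition bt_logit (R : realType) (d : measure_display) (X : measurableType d)
  (p : probability X R) (r : X -> R) (x : X) : R :=
  ln (pos_prob p r x / (1 - pos_prob p r x)).

(* Main.v *)
Require Import Defs.
From HB Require Import structures.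
From mathcomp Require Import all_boot all_order all_algebra.
From mathcomp Require Import all_classical all_reals all_analysis.
From mathcomp Require Import ring lra.
Import Order.TTheory GRing.Theory Num.Theory.
Import numFieldNormedType.Exports.
Local Open Scope ring_scope.
Local Open Scope classical_set_scope.
Lemma phi_cont (R : realType) (a : R) : continuous (fun t : R => expR a / (expR a + expR t)).
Proof.
move=> t.
apply: cvgMl_tmp.
apply: cvgV; first by rewrite lt0r_neq0 // addr_gt0 // expR_gt0.
apply: cvgD; first exact: cvg_cst.
exact: continuous_expR.
Qed.

Lemma Rint_gt0 (R : realType) (d : measure_display) (X : measurableType d)
  (p : probability X R) (h : X -> R) :
  measurable_fun setT h -> p.-integrable setT (EFin \o h) ->
  (forall x, 0 < h x) -> 0 < Rintegral p setT h.
Proof.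
move=> mh ih hpos.
rewrite lt_neqAle Rintegral_ge0 ?andbT; last by move=> x _; exact: ltW.
apply/eqP => H0.
have fin : (\int[p]_(x in setT) (h x)%:E)%E \is a fin_num.
  exact: integrable_fin_num.
have E0 : (\int[p]_(x in setT) (h x)%:E)%E = 0%E.
  by rewrite -(fineK fin) /Rintegral in H0 *; rewrite -H0.
have Eabs : (\int[p]_(x in setT) `|(EFin \o h) x|)%E = 0%E.
  rewrite -E0; apply: eq_integral => x _ /=.

  by rewrite ger0_norm // ltW.
have := (ae_eq_integral_abs p measurableT ((measurable_realfun.measurable_EFinP _ _).2 mh)).1 Eabs.
case=> N [mN pN0 sub].
have NT : N = setT.
  apply/seteqP; split => // x _; apply: sub => /= H.
  by case: (H I) => /eqP; rewrite gt_eqF.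
move: pN0; rewrite NT => H1; have := @probability_setT _ _ _ p; rewrite H1 => /esym/eqP; rewrite onee_eq0. done.
Qed.

Lemma bnd_integrable (R : realType) (d : measure_display) (X : measurableType d)
  (p : probability X R) (h : X -> R) :
  measurable_fun setT h -> (forall x, `|h x| <= 1) -> p.-integrable setT (EFin \o h).
Proof.
move=> mh hb; apply: measurable_bounded_integrable => //.
  by have := @probability_setT _ _ _ p; move=> P1; rewrite -[X in (X < _)%E]/(p setT) P1 ltry.
exists 1; split => // M M1 x _; exact: le_trans (hb x) (ltW M1).
Qed.

Lemma frac_lt (R : realType) (A B E : R) : 0 < B -> B < A -> 0 < E ->
  B / (B + E) < A / (A + E).
Proof.
move=> B0 BA E0.
have A0 : 0 < A by exact: lt_trans BA.
rewrite -subr_gt0.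
have -> : A / (A + E) - B / (B + E) = (A - B) * E / ((A + E) * (B + E)).
  by field; apply/andP; split; rewrite lt0r_neq0 // addr_gt0.
by rewrite divr_gt0 // ?mulr_gt0 // ?subr_gt0 // addr_gt0.
Qed.

Lemma odds_lt (R : realType) (y1 y2 : R) : 0 < y1 -> y1 < y2 -> y2 < 1 ->
  y1 / (1 - y1) < y2 / (1 - y2).
Proof.
move=> y10 y12 y21.
have h1 : 0 < 1 - y1 by rewrite subr_gt0; exact: lt_trans y21.
have h2 : 0 < 1 - y2 by rewrite subr_gt0.
rewrite -subr_gt0.
have -> : y2 / (1 - y2) - y1 / (1 - y1) = (y2 - y1) / ((1 - y1) * (1 - y2)).
  by field; apply/andP; split; rewrite lt0r_neq0.
by rewrite divr_gt0 // ?mulr_gt0 // subr_gt0.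
Qed.

Section Main.
Variables (R : realType) (d : measure_display) (X : measurableType d)
  (p : probability X R) (r : X -> R) (hr : measurable_fun setT r).

Let g x := bt_pref r x.

Let gpos x j : 0 < g x j.
Proof. by rewrite /g /bt_pref divr_gt0 ?addr_gt0 ?expR_gt0. Qed.

Let glt1 x j : g x j < 1.
Proof.
by rewrite /g /bt_pref ltr_pdivrMr ?addr_gt0 ?expR_gt0 // mul1r ltrDl expR_gt0.
Qed.

Let gmeas x : measurable_fun setT (g x).
Proof.
rewrite /g /bt_pref.
apply: (measurableT_comp (f := fun t => expR (r x) / (expR (r x) + expR t))) => //.

apply: measurable_realfun.continuous_measurable_fun.
exact: phi_cont.
Qed.

Let gint x : p.-integrable setT (EFin \o g x).
Proof.
apply: bnd_integrable => // j; rewrite ger0_norm; [exact: ltW | exact: ltW].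
Qed.

Let F x := pos_prob p r x.

Let Fpos x : 0 < F x.
Proof. exact: Rint_gt0 (gmeas x) (gint x) (gpos x). Qed.

Let Flt1 x : F x < 1.
Proof.
rewrite -subr_gt0.
have c1 : p.-integrable setT (EFin \o (fun _ : X => (1 : R))).
  exact: finite_measure_integrable_cst.
have -> : 1 - F x = Rintegral p setT (fun j => 1 - g x j).
  rewrite RintegralB // Rintegral_cst //.
  have P1 := @probability_setT _ _ _ p.
  by rewrite -[X in fine X]/(p setT) P1 /= mul1r.
apply: Rint_gt0.
- exact: measurable_realfun.measurable_funB.
- apply: bnd_integrable; first exact: measurable_realfun.measurable_funB.
  move=> j; rewrite ger0_norm; last by rewrite subr_ge0 ltW.
  by rewrite lerBlDr lerDl ltW.
- by move=> j; rewrite subr_gt0.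
Qed.

Lemma forward x1 x2 : r x2 < r x1 -> bt_logit p r x2 < bt_logit p r x1.
Proof.
move=> rlt.
have Flt : F x2 < F x1.
  rewrite -subr_gt0.
  have -> : F x1 - F x2 = Rintegral p setT (fun j => g x1 j - g x2 j).
    by rewrite RintegralB.
  apply: Rint_gt0.
  - exact: measurable_realfun.measurable_funB.
  - apply: bnd_integrable; first exact: measurable_realfun.measurable_funB.
    move=> j; have := gpos x1 j; have := gpos x2 j; have := glt1 x1 j; have := glt1 x2 j.
    move=> *; rewrite ler_norml; apply/andP; split; lra.
  - move=> j; rewrite subr_gt0 /g /bt_pref.
    by apply: frac_lt; rewrite ?expR_gt0 ?ltr_expR.
rewrite /bt_logit ltr_ln ?posrE.
- exact: odds_lt (Fpos x2) Flt (Flt1 x1).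
- by rewrite divr_gt0 ?subr_gt0 ?Fpos ?Flt1.
- by rewrite divr_gt0 ?subr_gt0 ?Fpos ?Flt1.
Qed.

End Main.

Theorem theorem3p1 (R : realType) (d : measure_display) (X : measurableType d)
  (p : probability X R) (r : X -> R) (hr : measurable_fun setT r) (x1 x2 : X) :
  (r x1 > r x2) <-> (bt_logit p r x1 > bt_logit p r x2).
Proof.
split; first exact: (@forward _ _ _ p r hr).
case: (ltgtP (r x1) (r x2)) => [lt|gt|eq] H //.
- by have := @forward _ _ _ p r hr _ _ lt; rewrite ltNge (ltW H).
- have E : pos_prob p r x1 = pos_prob p r x2.
    by rewrite /pos_prob /bt_pref eq.
  by move: H; rewrite /bt_logit E ltxx.
Qed.
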